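(* Let $\ell\in\mathbb{F}$ and $\lambda\in(\widehat{\mathfrak h}_+)^*$. Then $J(\ell,\lambda)$ is an ideal of the vertex algebra $V_{\widehat{\mathfrak h}}(\ell,0)$ if and only if $\lambda_n(u)=0$ for all $u\in\mathfrak h$ and all integers $n\ge2$.
   Context: Let $p$ be a prime and $\mathbb{F}$ a field of characteristic $p$. Integers, and binomial coefficients $\binom{n}{k}=\frac{n(n-1)\cdots(n-k+1)}{k!}$ for $n\in\mathbb{Z}$, $k\in\mathbb{N}$, are viewed as elements of the prime subfield of $\mathbb{F}$. We write $\mathbb{Z}_+$ for the positive integers. <b>Formal calculus.</b> For every $n\in\mathbb{Z}$ set $(x+y)^n=\sum_{k\ge0}\binom{n}{k}x^{n-k}y^k$, and let $\delta(x)=\sum_{n\in\mathbb{Z}}x^n$. <b>Vertex algebras.</b> A vertex algebra over $\mathbb{F}$ is a vector space $V$ with a vector $\mathbf 1$ and a linear map $$Y(\cdot,x):V\to(\mathrm{End}\,V)[[x,x^{-1}]],\qquad v\mapsto Y(v,x)=\sum_{n\in\mathbb{Z}}v_nx^{-n-1},$$ satisfying the following conditions for all $u,v\in V$: <ul> <li>$u_nv=0$ for $n\gg0$;</li> <li>$Y(\mathbf 1,x)=\mathrm{id}_V$;</li> <li>$Y(v,x)\mathbf 1\in V[[x]]$ and its constant term is $v$;</li> <li>the Jacobi identity $$x_0^{-1}\delta\!\left(\tfrac{x_1-x_2}{x_0}\right)Y(u,x_1)Y(v,x_2)-x_0^{-1}\delta\!\left(\tfrac{x_2-x_1}{-x_0}\right)Y(v,x_2)Y(u,x_1)=x_2^{-1}\delta\!\left(\tfrac{x_1-x_0}{x_2}\right)Y(Y(u,x_0)v,x_2).$$</li>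 </ul> An ideal of $V$ is a subspace $I$ with $u_nv\in I$ and $v_nu\in I$ for all $u\in V$, $v\in I$, $n\in\mathbb{Z}$. <b>Heisenberg setup.</b> Let $\mathfrak h$ be a finite-dimensional $\mathbb{F}$-vector space with a non-degenerate symmetric bilinear form $\langle\cdot,\cdot\rangle$. The affine Lie algebra is $\widehat{\mathfrak h}=\mathfrak h\otimes\mathbb{F}[t,t^{-1}]\oplus\mathbb{F}\mathbf k$, where $\mathbf k$ is central and, writing $u(m)=u\otimes t^m$, $$[u(m),v(n)]=m\,\delta_{m+n,0}\langle u,v\rangle\mathbf k.$$ Set $\widehat{\mathfrak h}_+=\bigoplus_{n>0}\mathfrak h\otimes t^{-n}$ and $\widehat{\mathfrak h}_-=\bigoplus_{n>0}\mathfrak h\otimes t^{n}$. For a linear functional $\lambda\in(\widehat{\mathfrak h}_+)^*$, write $\lambda_n(u)=\lambda(u(-n))$ for $u\in\mathfrak h$, $n\in\mathbb{Z}_+$. <b>The vertex algebra $V_{\widehat{\mathfrak h}}(\ell,0)$.</b> For $\ell\in\mathbb{F}$, let $$V_{\widehat{\mathfrak h}}(\ell,0)=U(\widehat{\mathfrak h})\otimes_{U(\widehat{\mathfrak h}_-\oplus\mathfrak h\oplus\mathbb{F}\mathbf k)}\mathbb{F}_\ell,$$ where $\widehat{\mathfrak h}_-$ and $\mathfrak h=\mathfrak h\otimes t^0$ act on $\mathbb{F}_\ell=\mathbb{F}$ by $0$ and $\mathbf k$ acts by $\ell$. Set $\mathbf 1=1\otimes1$ and identify $u\in\mathfrak h$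 with $u(-1)\mathbf 1$. Then $V_{\widehat{\mathfrak h}}(\ell,0)$ is a vertex algebra with vacuum $\mathbf 1$, uniquely determined by $Y(u,x)=\sum_{n\in\mathbb{Z}}u(n)x^{-n-1}$ for $u\in\mathfrak h$. <b>The submodule $J(\ell,\lambda)$.</b> For $\lambda\in(\widehat{\mathfrak h}_+)^*$, let $J(\ell,\lambda)$ be the $\widehat{\mathfrak h}$-submodule of $V_{\widehat{\mathfrak h}}(\ell,0)$ generated by the vectors <ul> <li>$(u(-m)^p-\lambda_m(u)^p)\mathbf 1$ for $u\in\mathfrak h$, $m\in\mathbb{Z}_+$;</li> <li>$(u(-n)-\lambda_n(u))\mathbf 1$ for $u\in\mathfrak h$, $n\in p\mathbb{Z}_+$.</li> </ul> *)

(* Defs.v *)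
From HB Require Import structures.
From mathcomp Require Import all_boot all_order all_algebra.
Set Implicit Arguments.
Unset Strict Implicit.
Unset Printing Implicit Defensive.
Import Order.TTheory GRing.Theory Num.Theory.
Local Open Scope ring_scope.

(* Generalized binomial coefficient  binom(r,k) = r(r-1)...(r-k+1)/k!  for
   r : int, k : nat, as an integer (to be cast into F via %:~R):
   for r = n >= 0 it is 'C(n,k); for r = Negz n = -(n+1) it is
   (-1)^k 'C(n+k,k). *)
Definition binz (r : int) (k : nat) : int :=
  match r with
  | Posz n => ('C(n, k))%:Z
  | Negz n => (-1) ^+ k * ('C(n + k, k))%:Z
  end.

Section Defs.
Variable F : fieldType.

Definition nondeg_sym_bilinear (H : lmodType F) (form : H -> H -> F) : Prop :=
  [/\ (forall u1 u2 v (c : F), form (c *: u1 + u2) v = c * form u1 v + form u2 v),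
      (forall u v, form u v = form v u)
    & (forall u, (forall v, form u v = 0) -> u = 0)].

(* W is an  \hat h-module on which k acts by ell:  b u n  is the action of
   u(n) = u \otimes t^n, linear in u and in the vector, satisfying
   [u(m), v(n)] = m delta_{m+n,0} <u,v> k  with k = ell. *)
Definition heis_module (H : lmodType F) (form : H -> H -> F) (ell : F)
  (W : lmodType F) (b : H -> int -> W -> W) : Prop :=
  [/\ (forall u n (c : F) x y, b u n (c *: x + y) = c *: b u n x + b u n y),
      (forall u1 u2 (c : F) n x, b (c *: u1 + u2) n x = c *: b u1 n x + b u2 n x)
    & (forall u v (m n : int) x,
         b u m (b v n x) - b v n (b u m x)
         = (if m + n == 0 then m%:~R * form u v * ell else 0) *: x)].

(* (V, a, one) is the induced module
     V_{\hat h}(ell,0) = U(\hat h) \otimes_{U(\hat h_- + h + F k)} F_ell,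
   one = 1 \otimes 1, characterized by its universal property: for every
   \hat h-module W (with k acting by ell) and every w in W killed by all
   u(n), n >= 0, there is a unique module map V -> W sending one to w. *)
Definition induced_vacuum_module (H : lmodType F) (form : H -> H -> F)
  (ell : F) (V : lmodType F) (a : H -> int -> V -> V) (one : V) : Prop :=
  [/\ heis_module form ell a,
      (forall u (n : int), 0 <= n -> a u n one = 0)
    & (forall (W : lmodType F) (b : H -> int -> W -> W) (w : W),
         heis_module form ell b ->
         (forall u (n : int), 0 <= n -> b u n w = 0) ->
         exists f : V -> W,
           [/\ (forall (c : F) x y, f (c *: x + y) = c *: f x + f y),
               f one = w,
               (forall u n x, f (a u n x) = b u n (f x))
             & (forall g : V -> W,
                  (forall (c : F) x y, g (c *: x + y) = c *: g x + g y) ->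
                  g one = w ->
                  (forall u n x, g (a u n x) = b u n (g x)) ->
                  forall x, g x = f x)])].

(* Vertex algebra axioms for Y, with  Y v n = v_n  (so Y(v,x) = sum v_n x^{-n-1}).
   The Jacobi identity is stated coefficientwise: the coefficient of
   x0^{-l-1} x1^{-m-1} x2^{-n-1} of both sides, applied to w, where the
   (eventually vanishing) sums over i >= 0 are taken up to any large bound K. *)
Definition jacobi_identity (V : lmodType F) (Y : V -> int -> V -> V) : Prop :=
  forall (u v w : V) (l m n : int), exists N : nat, forall K : nat, (N <= K)%N ->
    \sum_(i < K) (((-1) ^+ i * (binz l i)%:~R) *:
        (Y u (l + m - (i : nat)%:Z) (Y v (n + (i : nat)%:Z) w)
         - ((-1) ^ l) *: Y v (l + n - (i : nat)%:Z) (Y u (m + (i : nat)%:Z) w)))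
    = \sum_(i < K) ((binz m i)%:~R *: Y (Y u (l + (i : nat)%:Z) v) (m + n - (i : nat)%:Z) w).

Definition vertex_algebra (V : lmodType F) (Y : V -> int -> V -> V) (one : V) : Prop :=
  [/\
      (forall v n (c : F) x y, Y v n (c *: x + y) = c *: Y v n x + Y v n y),
      (forall (c : F) v1 v2 n x, Y (c *: v1 + v2) n x = c *: Y v1 n x + Y v2 n x),
      (forall u v, exists N : int, forall n, N <= n -> Y u n v = 0),
      (forall n w, Y one n w = if n == -1 then w else 0)
    & [/\
          (forall v (n : int), 0 <= n -> Y v n one = 0),
          (forall v, Y v (-1) one = v)
        & jacobi_identity Y]].

Definition subspace (V : lmodType F) (S : V -> Prop) : Prop :=
  [/\ S 0, (forall x y, S x -> S y -> S (x + y)) & (forall (c : F) x, S x -> S (c *: x))].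

Definition is_ideal (V : lmodType F) (Y : V -> int -> V -> V) (I : V -> Prop) : Prop :=
  subspace I /\ (forall (u v : V) (n : int), I v -> I (Y u n v) /\ I (Y v n u)).

(* J(ell, lambda): the \hat h-submodule generated by the listed vectors.
   lam n u stands for lambda_n(u) = lambda(u(-n)), n >= 1. *)
Definition J_gen (H : lmodType F) (V : lmodType F) (p : nat)
  (a : H -> int -> V -> V) (one : V) (lam : nat -> H -> F) (x : V) : Prop :=
  (exists u (m : nat), (0 < m)%N /\
      x = iter p (a u (- (m%:Z))) one - (lam m u) ^+ p *: one)
  \/ (exists u (n : nat), [/\ (0 < n)%N, (p %| n)%N &
      x = a u (- (n%:Z)) one - lam n u *: one]).

Definition J_submodule (H : lmodType F) (V : lmodType F) (p : nat)
  (a : H -> int -> V -> V) (one : V) (lam : nat -> H -> F) (x : V) : Prop :=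
  forall S : V -> Prop,
    subspace S -> (forall u n y, S y -> S (a u n y)) ->
    (forall y, J_gen p a one lam y -> S y) -> S x.

End Defs.

(* Main.v *)
Require Import Defs.
From HB Require Import structures.
From mathcomp Require Import all_boot all_order all_algebra.
From mathcomp Require Import boolp functions zify.
Import Order.TTheory GRing.Theory Num.Theory.
Local Open Scope ring_scope.

Section OpFrob.
Variables (F : fieldType) (W : lmodType F).

Definition addop (A : W -> W) := forall x y, A (x + y) = A x + A y.

Lemma addop0 A : addop A -> A 0 = 0.
Proof. move=> hA; have h := hA 0 0; rewrite addr0 in h.
by apply: (addrI (A 0)); rewrite addr0 -h. Qed.

Lemma addopMn A : addop A -> forall x n, A (x *+ n) = A x *+ n.
Proof.
move=> hA x; elim=> [|n IH]; first by rewrite !mulr0n addop0.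
by rewrite !mulrS hA IH.
Qed.

Lemma addop_sum (A : W -> W) (hA : addop A) (I : Type) (r : seq I) (P : pred I) (G : I -> W) :
  A (\sum_(i <- r | P i) G i) = \sum_(i <- r | P i) A (G i).
Proof.
elim: r => [|i r IH]; first by rewrite !big_nil addop0.
by rewrite !big_cons; case: (P i); rewrite ?hA IH.
Qed.

Lemma addop_iter A n : addop A -> addop (iter n A).
Proof. move=> hA; elim: n => [|n IH] x y //=; by rewrite IH hA. Qed.

Lemma iter_comm (A B : W -> W) : (forall x, A (B x) = B (A x)) ->
  forall n x, iter n A (B x) = B (iter n A x).
Proof. move=> c; elim=> [|n IH] x //=; by rewrite IH c. Qed.

Definition opD (A B : W -> W) := fun z => A z + B z.

Lemma iterD_binom (A B : W -> W) : addop A -> addop B -> (forall x, A (B x) = B (A x)) ->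
  forall n x, iter n (opD A B) x =
     \sum_(i < n.+1) (iter (n - i) A (iter i B x)) *+ 'C(n, i).
Proof.
move=> hA hB c; elim=> [|n IHn] x.
  by rewrite big_ord_recl big_ord0 addr0 /=.
rewrite iterS IHn /opD (addop_sum _ hA) (addop_sum _ hB).
under eq_bigr do rewrite (addopMn _ hA).
under [X in _ + X]eq_bigr do rewrite (addopMn _ hB).
rewrite big_ord_recl [X in _ + X]big_ord_recr /=.
rewrite [in RHS]big_ord_recl [in RHS]big_ord_recr /=.
rewrite !binn !subnn !bin0 !subn0 /=.
rewrite -!addrA; congr (_ + _).
rewrite addrA -big_split /= add0n; congr (_ + _).
apply: eq_bigr => i _.
rewrite /bump /= !add1n add0n binS mulrnDr; congr (_ + _).
  by rewrite subSS -iterS -subSn ?ltn_ord.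
by rewrite (iter_comm _ _ c).
Qed.


Variables (p : nat) (HpF : p \in [pchar F]).

Lemma mulrn_pcharW (x : W) k : (p %| k)%N -> x *+ k = 0.
Proof.
case/dvdnP=> q ->; rewrite mulnC mulrnA.
by rewrite -(scaler_nat p) (pcharf0 HpF) scale0r mul0rn.
Qed.

Lemma iterD_frob (A B : W -> W) : addop A -> addop B -> (forall x, A (B x) = B (A x)) ->
  forall x, iter p (opD A B) x = iter p A x + iter p B x.
Proof.
move=> hA hB c x; rewrite iterD_binom //.
have pp := pcharf_prime HpF; have p0 : (0 < p)%N by exact: prime_gt0.
have [q eq] : exists q, p = q.+1 by exists p.-1; rewrite prednK.
have dv : forall i : 'I_q, (p %| 'C(p, bump 0 i))%N.
  move=> i; apply: prime_dvd_bin => //.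
  by rewrite /bump /= add1n /= eq ltnS.
move: dv; rewrite eq => dv.
rewrite big_ord_recl big_ord_recr /= ?subn0 ?subnn ?bin0 ?binn /=.
rewrite big1 ?addr0 ?add0n ?add0r ?mulr1n //= => i _.
by apply: mulrn_pcharW; rewrite eq; apply: dv.
Qed.


Lemma iter_sum_frob (r : nat) (T : nat -> W -> W) :
  (forall i, addop (T i)) -> (forall i j x, T i (T j x) = T j (T i x)) ->
  forall x, iter p (fun z => \sum_(i < r) T i z) x = \sum_(i < r) iter p (T i) x.
Proof.
move=> hT cT; elim: r => [|r IH] x.
  rewrite big_ord0; have p0 : (0 < p)%N by exact: prime_gt0 (pcharf_prime HpF).
  by case: p p0 => // q _; rewrite iterS big_ord0.
have -> : (fun z => \sum_(i < r.+1) T i z) = opD (fun z => \sum_(i < r) T i z) (T r).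
  by apply: funext => z; rewrite big_ord_recr.
rewrite iterD_frob ?big_ord_recr ?IH //=.
- by move=> y z; rewrite -big_split; apply: eq_bigr => i _; rewrite hT.
- by move=> y; rewrite (addop_sum _ (hT r)); apply: eq_bigr => i _; rewrite cT.
Qed.

Lemma iter_sum_frob_seq (I : Type) (r : seq I) (T : I -> W -> W) :
  (forall i, addop (T i)) -> (forall i j x, T i (T j x) = T j (T i x)) ->
  forall x, iter p (fun z => \sum_(i <- r) T i z) x = \sum_(i <- r) iter p (T i) x.
Proof.
move=> hT cT; elim: r => [|i r IH] x.
  rewrite big_nil; have p0 : (0 < p)%N by exact: prime_gt0 (pcharf_prime HpF).
  by case: p p0 => // q _; rewrite iterS big_nil.
have -> : (fun z => \sum_(j <- i :: r) T j z) = opD (T i) (fun z => \sum_(j <- r) T j z).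
  by apply: funext => z; rewrite big_cons.
rewrite iterD_frob ?big_cons ?IH //=.
- by move=> y z; rewrite -big_split; apply: eq_bigr => j _; rewrite hT.
- by move=> y; rewrite (addop_sum _ (hT i)); apply: eq_bigr => j _; rewrite cT.
Qed.

Lemma iter_scale (c : F) n (x : W) : iter n (fun z => c *: z) x = c ^+ n *: x.
Proof. elim: n => [|n IH] /=; first by rewrite scale1r. by rewrite IH scalerA exprS. Qed.

End OpFrob.
Arguments addop {F W}.
Arguments addop0 {F W}.
Arguments addopMn {F W}.
Arguments addop_sum {F W}.
Arguments addop_iter {F W}.
Arguments iter_comm {F W}.
Arguments opD {F W}.
Arguments iterD_binom {F W}.
Arguments iterD_frob {F W p}.
Arguments iter_sum_frob {F W p}.
Arguments iter_sum_frob_seq {F W p}.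
Arguments iter_scale {F W}.
Arguments mulrn_pcharW {F W p}.


Section SubW.
Variables (F : fieldType) (V : lmodType F) (G : V -> Prop) (hG : subspace G).
Definition Gb : pred V := fun x => `[< G x >].
Definition GW of subspace G := {x : V | Gb x}.
HB.instance Definition _ := SubType.copy (GW hG) {x : V | Gb x}.
HB.instance Definition _ := [Choice of (GW hG) by <:].
Lemma Gb_closed : GRing.subsemimod_closed Gb.
Proof.
case: hG => h0 hD hZ; split; first split.
- by apply/asboolP.
- by move=> u v /asboolP hu /asboolP hv; apply/asboolP; apply: hD.
- by move=> c u /asboolP hu; apply/asboolP; apply: hZ.
Qed.
HB.instance Definition _ := GRing.SubChoice_isSubLmodule.Build _ _ _ (GW hG) Gb_closed.
Lemma GW_val_lin (c : F) (x y : GW hG) : val (c *: x + y) = c *: val x + val y.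
Proof. by []. Qed.
End SubW.

Section Span.
Variables (F : fieldType) (H : lmodType F) (form : H -> H -> F) (ell : F)
  (V : lmodType F) (a : H -> int -> V -> V) (one : V)
  (HV : induced_vacuum_module form ell a one).

Lemma span_all (G : V -> Prop) : subspace G -> (forall u n y, G y -> G (a u n y)) ->
  G one -> forall x, G x.
Proof.
move=> hG hS h1.
pose bW (u : H) (n : int) (y : @GW F V G hG) : @GW F V G hG :=
  exist _ (a u n (val y)) (introT (asboolP _) (hS u n _ (elimT (asboolP _) (valP y)))).
have vb : forall u n y, val (bW u n y) = a u n (val y) by [].
case: HV => [[hl1 hl2 hc] hvac hU].
have hW : heis_module form ell bW.
  split.
  - by move=> u n c x y; apply: val_inj; rewrite /= hl1.
  - by move=> u1 u2 c n x; apply: val_inj; rewrite /= hl2.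
  - by move=> u v m n x; apply: val_inj; rewrite /= hc.
have w1 : Gb F V G one by apply/asboolP.
have hw : forall u n, 0 <= n -> bW u n (exist _ one w1) = 0.
  by move=> u n hn; apply: val_inj; rewrite /= hvac.
have [f [fl f1 fa _]] := hU (@GW F V G hG) bW (exist _ one w1) hW hw.
have [f0 [_ _ _ f0u]] := hU V a one (And3 hl1 hl2 hc) hvac.
move=> x.
have e1 : val (f x) = f0 x.
  apply: (f0u (fun y => val (f y))) => //.
  - by move=> c y z; rewrite fl.
  - by rewrite f1.
  - by move=> u n y; rewrite fa.
have e2 : x = f0 x by apply: (f0u id).
by rewrite e2 -e1; apply/asboolP; exact: (valP (f x)).
Qed.
End Span.


Section Ops.
Variables (F : fieldType) (p : nat) (Hp : prime p) (HpF : p \in [pchar F]) (d : nat).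

Definition E := nat -> 'I_d -> nat.
Definition W := E -> F^o.

Definition upd (e : E) (m : nat) (i : 'I_d) (v : nat) : E :=
  fun m' i' => if (m' == m) && (i' == i) then v else e m' i'.

Lemma upd_same e m i v : upd e m i v m i = v.
Proof. by rewrite /upd !eqxx. Qed.
Lemma upd_other e m i v m' i' : ~~ ((m' == m) && (i' == i)) -> upd e m i v m' i' = e m' i'.
Proof. by rewrite /upd => /negbTE ->. Qed.
Lemma upd_upd e m i v v' : upd (upd e m i v) m i v' = upd e m i v'.
Proof.
apply: funext => m'; apply: funext => i'; rewrite /upd.
by case: ifP => // ->.
Qed.
Lemma upd_comm e m i v m' i' v' : ~~ ((m' == m) && (i' == i)) ->
  upd (upd e m i v) m' i' v' = upd (upd e m' i' v') m i v.
Proof.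
move=> hne; apply: funext => m2; apply: funext => i2; rewrite /upd.
case: (m2 =P m') => [->|]; case: (i2 =P i') => [->|] //=; rewrite ?andbT ?andbF //.
by move/negbTE: hne => ->.
Qed.

Definition yop m i (g : W) : W := fun e =>
  if (e m i == 0%N) || (e m i == p) then 0 else g (upd e m i (e m i).-1).
Definition dop m i (g : W) : W := fun e =>
  if (e m i).+1 == p then 0 else ((e m i).+1)%:R * g (upd e m i (e m i).+1).

Lemma yopD m i : addop (yop m i).
Proof. move=> g h; apply: funext => e; rewrite /yop !addrfctE /=; case: ifP => //; by rewrite addr0. Qed.
Lemma dopD m i : addop (dop m i).
Proof. move=> g h; apply: funext => e; rewrite /dop !addrfctE /=; case: ifP => //; by rewrite ?addr0 ?mulrDr. Qed.
Lemma yopZ m i c g : yop m i (c *: g) = c *: yop m i g.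
Proof. apply: funext => e; rewrite /yop !scalrfctE /=; case: ifP => _; by rewrite ?scaler0. Qed.
Lemma dopZ m i c g : dop m i (c *: g) = c *: dop m i g.
Proof.
apply: funext => e; rewrite /dop !scalrfctE /=; case: ifP => _; rewrite ?scaler0 //.
by rewrite /GRing.scale /= mulrCA.
Qed.


Lemma upd_id e m i : upd e m i (e m i) = e.
Proof.
apply: funext => m'; apply: funext => i'; rewrite /upd.
by case: (m' =P m) => [->|]; case: (i' =P i) => [->|].
Qed.

Lemma neq_sym {m m' : nat} {i i' : 'I_d} :
  ~~ ((m' == m) && (i' == i)) -> ~~ ((m == m') && (i == i')).
Proof. by rewrite eq_sym [i == _]eq_sym. Qed.

Lemma yy m i m' i' g : yop m i (yop m' i' g) = yop m' i' (yop m i g).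
Proof.
case hne: ((m' == m) && (i' == i)); first by case/andP: hne => /eqP -> /eqP ->.
move/negbT: hne => hne; have hne' := neq_sym hne.
apply: funext => e; rewrite /yop !upd_other //.
case: ifP => // _; case: ifP => // _.
by rewrite upd_comm.
Qed.

Lemma dd m i m' i' g : dop m i (dop m' i' g) = dop m' i' (dop m i g).
Proof.
case hne: ((m' == m) && (i' == i)); first by case/andP: hne => /eqP -> /eqP ->.
move/negbT: hne => hne; have hne' := neq_sym hne.
apply: funext => e; rewrite /dop !upd_other //.
case: ifP => _; case: ifP => _; rewrite ?mulr0 //.
by rewrite upd_comm // mulrCA.
Qed.

Lemma dy m i m' i' g :
  dop m i (yop m' i' g) - yop m' i' (dop m i g) = if (m == m') && (i == i') then g else 0.
Proof.
case hne: ((m == m') && (i == i')); last first.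
  move/negbT: hne => hne; have hne' := neq_sym hne.
  apply: funext => e; rewrite addrfctE opprfctE /= /yop /dop !upd_other //.
  case: ifP => _; case: ifP => _; rewrite ?mulr0 ?subr0 ?subrr //.
  by rewrite upd_comm // subrr.
case/andP: hne => /eqP <- /eqP <-.
have p2 := prime_gt1 Hp.
apply: funext => e; rewrite addrfctE opprfctE /= /yop /dop !upd_same !upd_upd upd_id.
set x := e m i.
have hu : upd e m i x = e by exact: upd_id.
case: (eqVneq x.+1 p) => hx1.
  rewrite sub0r.
  have -> : (x == 0%N) = false by apply/negbTE; lia.
  have -> : (x == p) = false by apply/negbTE; lia.
  rewrite /= (_ : x.-1.+1 = x); last by lia.
  rewrite (_ : (x == p) = false); last by apply/negbTE; lia.
  rewrite hu.
  have : (x.+1)%:R = 0 :> F by rewrite hx1 (pcharf0 HpF).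
  by rewrite -addn1 natrD => /eqP; rewrite addr_eq0 => /eqP ->; rewrite mulN1r opprK.
rewrite /=.
case: (eqVneq x 0%N) => hx0.
  by rewrite /= hx0 subr0 mul1r.
case: (eqVneq x p) => hxp /=.
  by rewrite subr0 -addn1 natrD hxp (pcharf0 HpF) add0r mul1r.
rewrite (_ : x.-1.+1 = x); last by lia.
rewrite (negbTE hxp) hu -addn1 natrD mulrDl mul1r.
by rewrite addrAC subrr add0r.
Qed.

End Ops.

Arguments yop {F} p {d}.
Arguments dop {F} p {d}.

Section Model.
Variables (F : fieldType) (p : nat) (Hp : prime p) (HpF : p \in [pchar F])
  (H : vectType F) (form : H -> H -> F) (Hform : nondeg_sym_bilinear form)
  (ell : F) (lam : nat -> H -> F)
  (Hlam : forall n : nat, (0 < n)%N ->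
     forall (c : F) (u v : H), lam n (c *: u + v) = c * lam n u + lam n v).

Let d := \dim (fullv : {vspace H}).
Let bs := vbasis (fullv : {vspace H}).
Let Wt := W F d.

Definition cu (i : 'I_d) (u : H) : F := coord bs i u.
Definition Yu m u (g : Wt) : Wt := \sum_(i < d) cu i u *: yop p m i g.
Definition Du m u (g : Wt) : Wt := \sum_(i < d) form u bs`_i *: dop p m i g.

Lemma form_l c u1 u2 v : form (c *: u1 + u2) v = c * form u1 v + form u2 v.
Proof. by case: Hform => h _ _; apply: h. Qed.
Lemma form_sym u v : form u v = form v u.
Proof. by case: Hform => _ h _; apply: h. Qed.
Lemma form_r c u v1 v2 : form u (c *: v1 + v2) = c * form u v1 + form u v2.
Proof. by rewrite form_sym form_l !(form_sym u). Qed.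
Lemma form_r0 u : form u 0 = 0.
Proof.
have h := form_r 1 u 0 0; rewrite scaler0 addr0 mul1r in h.
by apply: (addrI (form u 0)); rewrite addr0 -h.
Qed.
Lemma form_rsum u (I : Type) (r : seq I) (P : pred I) (c : I -> F) (v : I -> H) :
  form u (\sum_(i <- r | P i) c i *: v i) = \sum_(i <- r | P i) c i * form u (v i).
Proof.
elim: r => [|i r IH]; first by rewrite !big_nil form_r0.
by rewrite !big_cons; case: ifP => // _; rewrite form_r IH.
Qed.
Lemma form_expand u v : \sum_(i < d) form u bs`_i * cu i v = form u v.
Proof.
rewrite [in RHS](coord_vbasis (memvf v)) form_rsum.
by apply: eq_bigr => i _; rewrite mulrC.
Qed.

Lemma cu_lin i c u1 u2 : cu i (c *: u1 + u2) = c * cu i u1 + cu i u2.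
Proof. exact: coord_is_scalar. Qed.

Lemma YuD m u : addop (Yu m u).
Proof.
move=> g h; rewrite /Yu -big_split /=; apply: eq_bigr => i _.
by rewrite yopD scalerDr.
Qed.
Lemma DuD m u : addop (Du m u).
Proof.
move=> g h; rewrite /Du -big_split /=; apply: eq_bigr => i _.
by rewrite dopD scalerDr.
Qed.
Lemma YuZ m u c g : Yu m u (c *: g) = c *: Yu m u g.
Proof.
rewrite /Yu scaler_sumr; apply: eq_bigr => i _.
by rewrite yopZ !scalerA mulrC.
Qed.
Lemma DuZ m u c g : Du m u (c *: g) = c *: Du m u g.
Proof.
rewrite /Du scaler_sumr; apply: eq_bigr => i _.
by rewrite dopZ !scalerA mulrC.
Qed.
Lemma Yu_u m c u1 u2 g : Yu m (c *: u1 + u2) g = c *: Yu m u1 g + Yu m u2 g.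
Proof.
rewrite /Yu scaler_sumr -big_split /=; apply: eq_bigr => i _.
by rewrite cu_lin scalerDl scalerA.
Qed.
Lemma Du_u m c u1 u2 g : Du m (c *: u1 + u2) g = c *: Du m u1 g + Du m u2 g.
Proof.
rewrite /Du scaler_sumr -big_split /=; apply: eq_bigr => i _.
by rewrite form_l scalerDl scalerA.
Qed.

Lemma Yu0 m u : Yu m u 0 = 0. Proof. exact: addop0 _ (YuD m u). Qed.
Lemma Du0 m u : Du m u 0 = 0. Proof. exact: addop0 _ (DuD m u). Qed.

Lemma yop_sum m i (I : Type) (r : seq I) (P : pred I) (G : I -> Wt) :
  yop p m i (\sum_(j <- r | P j) G j) = \sum_(j <- r | P j) yop p m i (G j).
Proof. by rewrite (addop_sum _ (yopD _ _ _ m i)). Qed.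
Lemma dop_sum m i (I : Type) (r : seq I) (P : pred I) (G : I -> Wt) :
  dop p m i (\sum_(j <- r | P j) G j) = \sum_(j <- r | P j) dop p m i (G j).
Proof. by rewrite (addop_sum _ (dopD _ _ _ m i)). Qed.

Lemma YuYu m u m' v g : Yu m u (Yu m' v g) = Yu m' v (Yu m u g).
Proof.
rewrite /Yu.
under eq_bigr do rewrite yop_sum scaler_sumr.
under [RHS]eq_bigr do rewrite yop_sum scaler_sumr.
rewrite exchange_big /=; apply: eq_bigr => i _; apply: eq_bigr => j _.
by rewrite !yopZ !scalerA mulrC yy.
Qed.
Lemma DuDu m u m' v g : Du m u (Du m' v g) = Du m' v (Du m u g).
Proof.
rewrite /Du.
under eq_bigr do rewrite dop_sum scaler_sumr.
under [RHS]eq_bigr do rewrite dop_sum scaler_sumr.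
rewrite exchange_big /=; apply: eq_bigr => i _; apply: eq_bigr => j _.
by rewrite !dopZ !scalerA mulrC dd.
Qed.
Lemma DuYu m u m' v g :
  Du m u (Yu m' v g) - Yu m' v (Du m u g) = (if m == m' then form u v else 0) *: g.
Proof.
rewrite /Du /Yu.
under eq_bigr do rewrite dop_sum scaler_sumr.
under [X in _ - X]eq_bigr do rewrite yop_sum scaler_sumr.
rewrite [X in _ - X]exchange_big /= -sumrB.
under eq_bigr do rewrite -sumrB.
have e : forall (i j : 'I_d), form u bs`_i *: dop p m i (cu j v *: yop p m' j g) -
   cu j v *: yop p m' j (form u bs`_i *: dop p m i g) =
   (form u bs`_i * cu j v) *: (if (m == m') && (i == j) then g else 0).
  move=> i j; rewrite dopZ yopZ !scalerA [cu j v * _]mulrC -scalerBr.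
  by rewrite dy.
under eq_bigr do under eq_bigr do rewrite e.
case: (eqVneq m m') => [em|hm] /=.
  subst m'; rewrite -form_expand scaler_suml; apply: eq_bigr => i _.
  rewrite (bigD1 i) //= eqxx big1 ?addr0 // => j hj.
  by rewrite eq_sym (negbTE hj) scaler0.
rewrite scale0r big1 // => i _; rewrite big1 // => j _.
by rewrite scaler0.
Qed.


Definition Tneg k u (g : Wt) : Wt := if (p %| k.+1)%N then 0 else Yu k.+1 u g.
Definition bmod (u : H) (n : int) (g : Wt) : Wt :=
  match n with
  | Posz m => if (m == 0%N) || (p %| m)%N then 0 else (m%:R * ell) *: Du m u g
  | Negz k => lam k.+1 u *: g + Tneg k u g
  end.

Lemma TnegD k u : addop (Tneg k u).
Proof. by move=> g h; rewrite /Tneg; case: ifP; rewrite ?addr0 // YuD. Qed.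
Lemma Tneg0 k u : Tneg k u 0 = 0. Proof. exact: addop0 _ (TnegD k u). Qed.
Lemma TnegZ k u c g : Tneg k u (c *: g) = c *: Tneg k u g.
Proof. by rewrite /Tneg; case: ifP; rewrite ?scaler0 // YuZ. Qed.
Lemma Tneg_u k c u1 u2 g : Tneg k (c *: u1 + u2) g = c *: Tneg k u1 g + Tneg k u2 g.
Proof. by rewrite /Tneg; case: ifP; rewrite ?scaler0 ?addr0 // Yu_u. Qed.

Lemma bmod_lin u n c x y : bmod u n (c *: x + y) = c *: bmod u n x + bmod u n y.
Proof.
case: n => [m|k] /=.
  by case: ifP => _; rewrite ?scaler0 ?addr0 // DuD DuZ scalerDr !scalerA mulrC.
rewrite TnegD TnegZ scalerDr scalerDr -!addrA; congr (_ + _).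
  by rewrite !scalerA mulrC.
by rewrite addrCA.
Qed.
Lemma bmod_add u n : addop (bmod u n).
Proof. by move=> x y; rewrite -{1}[x]scale1r bmod_lin scale1r. Qed.
Lemma bmod0 u n : bmod u n 0 = 0. Proof. exact: addop0 _ (bmod_add u n). Qed.
Lemma bmodZ u n c x : bmod u n (c *: x) = c *: bmod u n x.
Proof. by rewrite -[c *: x]addr0 bmod_lin bmod0 addr0. Qed.

Lemma bmod_u u1 u2 c n x : bmod (c *: u1 + u2) n x = c *: bmod u1 n x + bmod u2 n x.
Proof.
case: n => [m|k] /=.
  by case: ifP => _; rewrite ?scaler0 ?addr0 // Du_u scalerDr !scalerA mulrC.
rewrite Hlam // Tneg_u scalerDl -scalerA scalerDr -!addrA; congr (_ + _).
by rewrite addrCA.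
Qed.

Lemma TnegTneg k1 u k2 v g : Tneg k1 u (Tneg k2 v g) = Tneg k2 v (Tneg k1 u g).
Proof.
rewrite /Tneg; case: ifP => _; case: ifP => _; rewrite ?Yu0 //.
by rewrite YuYu.
Qed.

Lemma commNN u k1 v k2 x :
  bmod u (Negz k1) (bmod v (Negz k2) x) = bmod v (Negz k2) (bmod u (Negz k1) x).
Proof.
rewrite /= !TnegD !TnegZ TnegTneg !scalerDr !scalerA mulrC.
rewrite -!addrA; congr (_ + _); rewrite !addrA; congr (_ + _).
by rewrite addrC.
Qed.

Lemma commPP u m1 v m2 x :
  bmod u (Posz m1) (bmod v (Posz m2) x) = bmod v (Posz m2) (bmod u (Posz m1) x).
Proof.
rewrite /=; case: ifP => _; case: ifP => _; rewrite ?Du0 ?scaler0 //.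
by rewrite DuZ DuZ !scalerA mulrC DuDu.
Qed.

Lemma commPN u m1 v k2 x :
  bmod u (Posz m1) (bmod v (Negz k2) x) - bmod v (Negz k2) (bmod u (Posz m1) x)
  = (if Posz m1 + Negz k2 == 0 then (Posz m1)%:~R * form u v * ell else 0) *: x.
Proof.
have ez : (Posz m1 + Negz k2 == 0) = (m1 == k2.+1) by apply/eqP/eqP; lia.
rewrite ez.
case hc: ((m1 == 0%N) || (p %| m1)%N).
  rewrite /= hc scaler0 Tneg0 addr0 subrr.
  case: eqP => hm; last by rewrite scale0r.
  rewrite (_ : (Posz m1)%:~R = 0 :> F) ?mul0r ?scale0r //.
  rewrite -pmulrn; case/orP: hc => [/eqP ->//|]; by rewrite (dvdn_pcharf HpF) => /eqP.
rewrite /= hc DuD DuZ TnegZ !scalerDr !scalerA [_ * lam _ _]mulrC.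
rewrite opprD addrACA subrr add0r -scalerBr /Tneg.
case: ifP => hpk.
  rewrite Du0 subrr scaler0.
  case: eqP => hm; rewrite ?scale0r //; exfalso.
  by move: hc; rewrite hm hpk orbT.
rewrite DuYu scalerA -pmulrn; case: eqP => hm; rewrite ?mulr0 ?scale0r //.
by rewrite mulrAC.
Qed.

Lemma bmod_heis : heis_module form ell bmod.
Proof.
split.
- by move=> u n c x y; apply: bmod_lin.
- by move=> u1 u2 c n x; apply: bmod_u.
move=> u v [m1|k1] [m2|k2] x.
- rewrite commPP subrr; case: eqP => h; rewrite ?scale0r //.
  have -> : m1 = 0%N by lia.
  by rewrite mul0r mul0r scale0r.
- exact: commPN.
- have := commPN v m2 u k1 x.
  move=> /(congr1 (fun z => - z)); rewrite opprB => ->.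
  rewrite addrC -scaleNr; congr (_ *: _); case: eqP => h; rewrite ?oppr0 //.
  have e : Negz k1 = - Posz m2 by lia.
  by rewrite e mulrNz form_sym !mulNr.
- rewrite commNN subrr; case: eqP => h; rewrite ?scale0r //; exfalso; lia.
Qed.


Definition wv : Wt := fun e => if `[< forall m i, e m i = 0%N >] then 1 else 0.

Lemma dop_w m i : dop p m i wv = 0.
Proof.
apply: funext => e; rewrite /dop /wv; case: ifP => _ //.
rewrite asboolF ?mulr0 //.
move=> h; move: (h m i); by rewrite upd_same.
Qed.
Lemma Du_w m u : Du m u wv = 0.
Proof. by rewrite /Du big1 // => i _; rewrite dop_w scaler0. Qed.
Lemma bmod_vac u n : 0 <= n -> bmod u n wv = 0.
Proof. by case: n => // m _ /=; rewrite Du_w scaler0; case: ifP. Qed.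

Lemma yop_iter_w m i k e : iter k (yop p m i) wv e != 0 -> e m i = k /\ (k < p)%N.
Proof.
have p0 := prime_gt0 Hp.
elim: k e => [|k IH] e /=.
  rewrite /wv; case: asboolP => [h|h]; last by rewrite eqxx.
  by move=> _; rewrite h.
rewrite {1}/yop; case: ifP => hc; first by rewrite eqxx.
move=> hnz.
have [h1 h2] := IH _ hnz; rewrite upd_same in h1.
move: hc; case: (e m i) h1 => [|x] //= -> /negbT h3.
by split=> //; rewrite ltn_neqAle h3 /=; exact: h2.
Qed.
Lemma yop_iter_p m i : iter p (yop p m i) wv = 0.
Proof.
apply: funext => e; apply/eqP; case: eqP => // /eqP /yop_iter_w [_].
by rewrite ltnn.
Qed.

Lemma iter_scaled (c : F) (Op : Wt -> Wt) :
  (forall c g, Op (c *: g) = c *: Op g) ->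
  forall n g, iter n (fun z => c *: Op z) g = c ^+ n *: iter n Op g.
Proof.
move=> hZ; elim=> [|n IH] g /=; first by rewrite scale1r.
by rewrite IH hZ scalerA exprS.
Qed.

Lemma bmod_gen1 u M : iter p (bmod u (Negz M)) wv = lam M.+1 u ^+ p *: wv.
Proof.
have p0 := prime_gt0 Hp.
have -> : bmod u (Negz M) = opD (fun g => lam M.+1 u *: g) (Tneg M u) by apply: funext.
rewrite (iterD_frob HpF).
- rewrite iter_scale (_ : iter p (Tneg M u) wv = 0) ?addr0 //.
  have -> : Tneg M u = if (p %| M.+1)%N then (fun _ => 0) else Yu M.+1 u.
    by apply: funext => g; rewrite /Tneg; case: ifP.
  case: ifP => _.
    by case: p p0 => // q _; rewrite iterS.
  have -> : Yu M.+1 u = (fun z => \sum_(i <- index_enum 'I_d)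
      (fun i z => cu i u *: yop p M.+1 i z) i z) by [].
  rewrite (iter_sum_frob_seq HpF) ?big1 // => [i _|i|i j x].
  + rewrite iter_scaled ?yop_iter_p ?scaler0 // => c g; exact: yopZ.
  + by move=> x y; rewrite yopD scalerDr.
  + by rewrite !yopZ !scalerA mulrC yy.
- by move=> x y; rewrite scalerDr.
- exact: TnegD.
- by move=> x; rewrite TnegZ.
Qed.

Lemma bmod_gen2 u M : (p %| M.+1)%N -> bmod u (Negz M) wv = lam M.+1 u *: wv.
Proof. by move=> h; rewrite /= /Tneg h addr0. Qed.

Definition phi (g : Wt) : F := g (fun _ _ => 0%N).
Lemma phi_w : phi wv = 1.
Proof. by rewrite /phi /wv asboolT. Qed.
Lemma phi_lin c x y : phi (c *: x + y) = c * phi x + phi y.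
Proof. by []. Qed.
Lemma phi_bneg u M g : phi (bmod u (Negz M) g) = lam M.+1 u * phi g.
Proof.
rewrite /= (_ : phi (lam M.+1 u *: g + Tneg M u g) = lam M.+1 u * phi g + phi (Tneg M u g)) //.
rewrite (_ : phi (Tneg M u g) = 0) ?addr0 //.
rewrite /Tneg; case: ifP => _ //; rewrite /Yu /phi fct_sumE big1 // => i _.
by rewrite scalrfctE /= /yop eqxx /= scaler0.
Qed.

Lemma model_exists :
  exists (W : lmodType F) (b : H -> int -> W -> W) (w : W) (ph : W -> F),
   [/\ heis_module form ell b, (forall u n, 0 <= n -> b u n w = 0),
       (forall u M, iter p (b u (Negz M)) w = lam M.+1 u ^+ p *: w),
       (forall u M, (p %| M.+1)%N -> b u (Negz M) w = lam M.+1 u *: w) &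
       [/\ (forall u M g, ph (b u (Negz M) g) = lam M.+1 u * ph g), ph w = 1 &
          (forall c x y, ph (c *: x + y) = c * ph x + ph y)]].
Proof.
exists Wt, bmod, wv, phi; split.
- exact: bmod_heis.
- exact: bmod_vac.
- exact: bmod_gen1.
- exact: bmod_gen2.
split; [exact: phi_bneg | exact: phi_w | exact: phi_lin].
Qed.

End Model.


Lemma poly_frob (F : fieldType) p (HpF : p \in [pchar F]) (K j : nat) (c : nat -> F) :
  (j < K)%N -> ((\poly_(i < K) c i) ^+ p)`_(p * j) = c j ^+ p.
Proof.
move=> hj.
have chp : p \in [pchar {poly F}] by rewrite pchar_poly.
have p0 := prime_gt0 (pcharf_prime HpF).
rewrite poly_def -(pFrobenius_autE chp) rmorph_sum coef_sum.
rewrite (bigD1 (Ordinal hj)) //= big1 => [|i hi].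
  by rewrite addr0 pFrobenius_autE exprZn -exprM coefZ coefXn mulnC eqxx mulr1.
rewrite pFrobenius_autE exprZn -exprM coefZ coefXn [(i * p)%N]mulnC eqn_pmul2l //.
by rewrite (_ : (j == i) = false) ?mulr0 //; apply/negbTE; rewrite eq_sym; exact: hi.
Qed.

Section Main.
Variables (F : fieldType) (p : nat) (Hp : prime p) (HpF : p \in [pchar F])
  (H : vectType F) (form : H -> H -> F) (Hform : nondeg_sym_bilinear form)
  (ell : F)
  (V : lmodType F) (a : H -> int -> V -> V) (one : V)
  (HV : induced_vacuum_module form ell a one)
  (Y : V -> int -> V -> V) (HY : vertex_algebra Y one)
  (HYh : forall (u : H) (n : int) (w : V), Y (a u (-1) one) n w = a u n w)
  (lam : nat -> H -> F)
  (Hlam : forall n : nat, (0 < n)%N ->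
     forall (c : F) (u v : H), lam n (c *: u + v) = c * lam n u + lam n v).

Let HVh : heis_module form ell a. Proof. by case: HV. Qed.
Let HVvac : forall u (n : int), 0 <= n -> a u n one = 0. Proof. by case: HV. Qed.

Lemma a_lin u n c x y : a u n (c *: x + y) = c *: a u n x + a u n y.
Proof. by case: HVh => h _ _; apply: h. Qed.
Lemma a_add u n : addop (a u n).
Proof. by move=> x y; rewrite -{1}[x]scale1r a_lin scale1r. Qed.
Lemma a0 u n : a u n 0 = 0. Proof. exact: addop0 _ (a_add u n). Qed.
Lemma aZ u n c x : a u n (c *: x) = c *: a u n x.
Proof. by rewrite -[c *: x]addr0 a_lin a0 addr0. Qed.
Lemma a_sum u n (I : Type) (r : seq I) (P : pred I) (G : I -> V) :
  a u n (\sum_(i <- r | P i) G i) = \sum_(i <- r | P i) a u n (G i).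
Proof. by rewrite (addop_sum _ (a_add u n)). Qed.

Lemma Y_lin3 v n c x y : Y v n (c *: x + y) = c *: Y v n x + Y v n y.
Proof. by case: HY => h _ _ _ _; apply: h. Qed.
Lemma Y_add3 v n : addop (Y v n).
Proof. by move=> x y; rewrite -{1}[x]scale1r Y_lin3 scale1r. Qed.
Lemma Y0_3 v n : Y v n 0 = 0. Proof. exact: addop0 _ (Y_add3 v n). Qed.
Lemma YZ3 v n c x : Y v n (c *: x) = c *: Y v n x.
Proof. by rewrite -[c *: x]addr0 Y_lin3 Y0_3 addr0. Qed.
Lemma Y_lin1 c v1 v2 n x : Y (c *: v1 + v2) n x = c *: Y v1 n x + Y v2 n x.
Proof. by case: HY => _ h _ _ _; apply: h. Qed.
Lemma Y_add1 v1 v2 n x : Y (v1 + v2) n x = Y v1 n x + Y v2 n x.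
Proof. by rewrite -{1}[v1]scale1r Y_lin1 scale1r. Qed.
Lemma Y0_1 n x : Y 0 n x = 0.
Proof. have h := Y_add1 0 0 n x; rewrite addr0 in h.
by apply: (addrI (Y 0 n x)); rewrite addr0 -h. Qed.
Lemma YZ1 c v n x : Y (c *: v) n x = c *: Y v n x.
Proof. by rewrite -[c *: v]addr0 Y_lin1 Y0_1 addr0. Qed.
Lemma Yvac n w : Y one n w = if n == -1 then w else 0.
Proof. by case: HY => _ _ _ h _; apply: h. Qed.
Lemma Ycre v (n : int) : 0 <= n -> Y v n one = 0.
Proof. by case: HY => _ _ _ _ [h _ _]; apply: h. Qed.
Lemma Ycre1 v : Y v (-1) one = v.
Proof. by case: HY => _ _ _ _ [_ h _]. Qed.
Lemma Yjac : jacobi_identity Y.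
Proof. by case: HY => _ _ _ _ [_ _ h]. Qed.

Definition hv (u : H) := a u (-1) one.
Lemma Yh u n w : Y (hv u) n w = a u n w. Proof. exact: HYh. Qed.

Lemma addz0' (x : int) : x + (0%N)%:Z = x. Proof. exact: addr0. Qed.
Lemma subz0' (x : int) : x - (0%N)%:Z = x. Proof. exact: subr0. Qed.

Lemma jac_assoc u v w (l n : int) : exists K0 : nat, forall K : nat, (K0 <= K)%N ->
  Y (Y u l v) n w = \sum_(i < K) (((-1) ^+ i * (binz l i)%:~R) *:
        (Y u (l - (i : nat)%:Z) (Y v (n + (i : nat)%:Z) w)
         - ((-1) ^ l) *: Y v (l + n - (i : nat)%:Z) (Y u (i : nat)%:Z w))).
Proof.
have [N hN] := Yjac u v w l 0 n.
exists N.+1 => K hK; have e := hN K (ltnW hK).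
case: K hK e => // K _ e.
have r : \sum_(i < K.+1) (binz 0 i)%:~R *: Y (Y u (l + (i : nat)%:Z) v) (0 + n - (i : nat)%:Z) w
   = Y (Y u l v) n w.
  rewrite big_ord_recl big1 => [|i _].
    by rewrite /= addr0 add0r bin0 (_ : n - 0%Z = n) ?scale1r ?addr0 //; exact: subr0.
  by rewrite /= /bump /= add1n bin0n scale0r.
rewrite r in e; rewrite -e; apply: eq_bigr => i _.
by rewrite addr0 add0r.
Qed.

Lemma jac_comm u v w (m n : int) : exists K0 : nat, forall K : nat, (K0 <= K)%N ->
  Y u m (Y v n w) - Y v n (Y u m w) =
  \sum_(i < K) (binz m i)%:~R *: Y (Y u (i : nat)%:Z v) (m + n - (i : nat)%:Z) w.
Proof.
have [N hN] := Yjac u v w 0 m n.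
exists N.+1 => K hK; rewrite -(hN K (ltnW hK)).
case: K hK => // K _; rewrite big_ord_recl big1 => [|i _].
  by rewrite /= addr0 !add0r !subz0' ?addz0' expr0 bin0 mul1r scale1r expr0z scale1r.
by rewrite /= /bump /= add1n bin0n mulr0 scale0r.
Qed.


Lemma Drec h x' (M k : nat) :
  Y (a h (- (Posz M.+1)) x') (- (Posz k) - 1) one =
  \sum_(i < k.+1) ('C(M + i, i))%:R *:
      a h (- (Posz (M.+1 + i))) (Y x' (- (Posz (k - i)%N) - 1) one).
Proof.
rewrite -Yh.
have [K0 hK] := jac_assoc (hv h) x' one (- (Posz M.+1)) (- (Posz k) - 1).
rewrite (hK (maxn K0 k.+1) (leq_maxl _ _)).
rewrite (big_ord_widen (maxn K0 k.+1) (fun i : nat => ('C(M + i, i))%:R *: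
      a h (- (Posz (M.+1 + i))) (Y x' (- (Posz (k - i)%N) - 1) one)) (leq_maxr _ _)).
rewrite [RHS]big_mkcond /=; apply: eq_bigr => i _.
rewrite !Yh HVvac // Y0_3 scaler0 subr0.
have -> : - Posz M.+1 - Posz i = - Posz (M.+1 + i) by rewrite PoszD opprD.
case: ltnP => hi.
  have -> : - Posz k - 1 + Posz i = - Posz (k - i)%N - 1 by lia.
  congr (_ *: _); rewrite /binz /= intrM rmorphXn rmorphN1 mulrA -exprMn mulrNN mulr1.
  by rewrite expr1n mul1r pmulrn.
rewrite Ycre ?a0 ?scaler0 //; lia.
Qed.


Notation Jm := (J_submodule p a one lam).

Lemma J_sub : subspace Jm.
Proof.
split.
- by move=> S [h0 _ _] _ _.
- by move=> x y hx hy S hS hA hG; case: (hS) => _ hD _; apply: hD; [apply: hx | apply: hy].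
- by move=> c x hx S hS hA hG; case: (hS) => _ _ hZ; apply: hZ; apply: hx.
Qed.
Lemma J0 : Jm 0. Proof. by case: J_sub. Qed.
Lemma JD x y : Jm x -> Jm y -> Jm (x + y). Proof. by case: J_sub => _ h _; apply: h. Qed.
Lemma JZ c x : Jm x -> Jm (c *: x). Proof. by case: J_sub => _ _ h; apply: h. Qed.
Lemma JN x : Jm x -> Jm (- x). Proof. by move=> hx; rewrite -scaleN1r; apply: JZ. Qed.
Lemma JB x y : Jm x -> Jm y -> Jm (x - y). Proof. by move=> hx hy; apply: JD => //; apply: JN. Qed.
Lemma J_sum (I : Type) (r : seq I) (P : pred I) (G : I -> V) :
  (forall i, P i -> Jm (G i)) -> Jm (\sum_(i <- r | P i) G i).
Proof.
move=> hG; elim: r => [|i r IH]; first by rewrite big_nil; apply: J0.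
by rewrite big_cons; case: ifP => // hP; apply: JD => //; apply: hG.
Qed.
Lemma J_a u n x : Jm x -> Jm (a u n x).
Proof. by move=> hx S hS hA hG; apply: (hA); exact: (hx S hS hA hG). Qed.
Lemma J_g x : J_gen p a one lam x -> Jm x.
Proof. by move=> hx S hS hA hG; apply: hG. Qed.
Lemma J_ind (S : V -> Prop) : subspace S -> (forall u n y, S y -> S (a u n y)) ->
  (forall y, J_gen p a one lam y -> S y) -> forall x, Jm x -> S x.
Proof. by move=> hS hA hG x hx; exact: (hx S hS hA hG). Qed.

Lemma left_ideal u n x : Jm x -> Jm (Y u n x).
Proof.
move: u n x; apply: (span_all _ _ _ _ _ _ _ HV (fun u => forall n x, Jm x -> Jm (Y u n x))).
- split.
  + by move=> n x _; rewrite Y0_1; apply: J0.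
  + by move=> u v hu hv n x hx; rewrite Y_add1; apply: JD; [apply: hu | apply: hv].
  + by move=> c u hu n x hx; rewrite YZ1; apply: JZ; apply: hu.
- move=> h l u' hu' n x hx; rewrite -Yh.
  have [K0 hK] := jac_assoc (hv h) u' x l n.
  rewrite (hK K0 (leqnn _)); apply: J_sum => i _; apply: JZ; apply: JB.
    by rewrite Yh; apply: J_a; apply: hu'.
  by apply: JZ; apply: hu'; rewrite Yh; apply: J_a.
- by move=> n x hx; rewrite Yvac; case: ifP => _ //; apply: J0.
Qed.


Lemma a_comm_neg u (m1 m2 : nat) x : (0 < m1 + m2)%N ->
  a u (- Posz m1) (a u (- Posz m2) x) = a u (- Posz m2) (a u (- Posz m1) x).
Proof.
move=> hm; case: HVh => _ _ hc; apply/eqP; rewrite -subr_eq0 hc.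
rewrite ifF ?scale0r //; apply/eqP; lia.
Qed.

Definition Dsq x : nat -> V := fun k => Y x (- Posz k - 1) one.
Lemma Dsq_one k : Dsq one k = if k == 0%N then one else 0.
Proof. by rewrite /Dsq Yvac; case: k => [|k] //=. Qed.

Section Seq.
Variables (u : H) (M : nat).
Definition cf i : F := ('C(M + i, i))%:R.
Definition Bop i : V -> V := a u (- Posz (M.+1 + i)).
Definition Top i (s : nat -> V) : nat -> V :=
  fun k => if (i <= k)%N then cf i *: Bop i (s (k - i)%N) else 0.

Lemma Top_add i : addop (Top i).
Proof.
move=> s t; apply: funext => k; rewrite /Top /Bop !addrfctE /=.
by case: ifP => _; rewrite ?addr0 // a_add scalerDr.
Qed.

Lemma Top_comm i j s : Top i (Top j s) = Top j (Top i s).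
Proof.
apply: funext => k; rewrite /Top /Bop.
case: (leqP i k) => hi; case: (leqP j k) => hj //=.
- case: (leqP j (k - i)) => hji; case: (leqP i (k - j)) => hij; try lia.
    rewrite !aZ !scalerA mulrC; congr (_ *: _).
    rewrite (_ : (k - i - j = k - j - i)%N); last by lia.
    by apply: a_comm_neg.
  by rewrite !a0 !scaler0.
- by case: (leqP j (k - i)) => hji; try lia; rewrite a0 scaler0.
- by case: (leqP i (k - j)) => hij; try lia; rewrite a0 scaler0.
Qed.

Lemma Top_iter i j s k : iter j (Top i) s k =
  if (i * j <= k)%N then cf i ^+ j *: iter j (Bop i) (s (k - i * j)%N) else 0.
Proof.
elim: j k => [|j IH] k.
  by rewrite /= muln0 leq0n subn0 expr0 scale1r.
rewrite iterS {1}/Top IH.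
case: (leqP i k) => hi; case: (leqP (i * j.+1) k) => hij.
- case: (leqP (i * j) (k - i)) => h2; last by exfalso; rewrite mulnS in hij; lia.
  rewrite /Bop aZ scalerA -exprS iterS.
  by rewrite (_ : (k - i - i * j = k - i * j.+1)%N) //; rewrite mulnS; lia.
- case: (leqP (i * j) (k - i)) => h2; last by rewrite /Bop a0 scaler0.
  by exfalso; rewrite mulnS in hij; lia.
- by exfalso; rewrite mulnS in hij; lia.
- by [].
Qed.

Lemma Dsq_rec x' K k : (k < K)%N ->
  Dsq (a u (- Posz M.+1) x') k = (\sum_(i < K) Top i (Dsq x')) k.
Proof.
move=> hk; rewrite fct_sumE /Dsq Drec.
rewrite (big_ord_widen K (fun i : nat => ('C(M + i, i))%:R *:
      a u (- (Posz (M.+1 + i))) (Y x' (- (Posz (k - i)%N) - 1) one)) hk).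
rewrite big_mkcond /=; apply: eq_bigr => i _.
by rewrite /Top ltnS.
Qed.

Lemma Dsq_iter j K k : (k < K)%N ->
  Dsq (iter j (a u (- Posz M.+1)) one) k =
  iter j (fun s => \sum_(i < K) Top i s) (Dsq one) k.
Proof.
elim: j k => [|j IH] k hk //=.
rewrite (Dsq_rec _ _ _ hk) !fct_sumE; apply: eq_bigr => i _.
rewrite /Top; case: ifP => // hik; rewrite IH //; lia.
Qed.

End Seq.


Section Back.
Hypothesis hz : forall (u : H) (n : nat), (2 <= n)%N -> lam n u = 0.

Let p0 : (0 < p)%N. Proof. exact: prime_gt0. Qed.

Lemma D_gen1 u M k : (1 <= k)%N ->
  Jm (Dsq (iter p (a u (- Posz M.+1)) one) k).
Proof.
move=> hk; rewrite (Dsq_iter _ _ _ _ _ (ltnSn k)).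
rewrite (iter_sum_frob HpF _ _ (Top_add u M) (Top_comm u M)) fct_sumE.
apply: J_sum => i _; rewrite Top_iter Dsq_one.
case: ifP => hip; last by apply: J0.
case: eqP => hk0; last by rewrite (addop0 _ (addop_iter _ _ (a_add _ _))) scaler0; apply: J0.
apply: JZ; have hi : (1 <= i)%N.
  case: i hip hk0 => [[|i]] //= _ _ h; lia.
have -> : iter p (Bop u M i) one =
   iter p (a u (- Posz (M.+1 + i))) one - lam (M.+1 + i) u ^+ p *: one.
  by rewrite hz ?expr0n ?eqn0Ngt ?p0 //= ?scale0r ?subr0 //; lia.
apply: J_g; left; exists u, (M.+1 + i); split => //.
Qed.


Lemma negm1 (j : nat) : (- Posz j - 1 == -1) = (j == 0%N).
Proof. by apply/eqP/eqP; lia. Qed.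

Lemma Y_sub_one x c n : Y (x - c *: one) n one = Y x n one - c *: Y one n one.
Proof. by rewrite Y_add1 -scaleNr YZ1 scaleNr. Qed.

Lemma Dcl x : Jm x -> forall n, Jm (Y x n one).
Proof.
move: x; apply: (J_ind (fun x => forall n, Jm (Y x n one))).
- split.
  + by move=> n; rewrite Y0_1; apply: J0.
  + by move=> x1 x2 h1 h2 n; rewrite Y_add1; apply: JD.
  + by move=> c x1 h1 n; rewrite YZ1; apply: JZ.
- move=> h l x' hx' n; rewrite -Yh.
  have [K0 hK] := jac_assoc (hv h) x' one l n.
  rewrite (hK K0 (leqnn _)); apply: J_sum => i _; apply: JZ; apply: JB.
    by rewrite Yh; apply: J_a.
  by rewrite Yh HVvac // Y0_3 scaler0; apply: J0.
move=> y hy n; case: n => [n|[|k]].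
- by rewrite Ycre //; apply: J0.
- by rewrite (_ : Negz 0 = -1) // Ycre1; apply: J_g.
have -> : Negz k.+1 = - Posz k.+1 - 1 by lia.
case: hy => [[u [m [hm ->]]] | [u [n0 [hn0 hpn ->]]]].
  rewrite Y_sub_one Yvac negm1 /= scaler0 subr0.
  case: m hm => // M _; exact: (D_gen1 u M k.+1 isT).
rewrite Y_sub_one Yvac negm1 /= scaler0 subr0.
case: n0 hn0 hpn => // M _ hpn.
have hpM : (p <= M.+1)%N by apply: dvdn_leq.
rewrite Drec; apply: J_sum => i _.
rewrite Yvac negm1; case: eqP => hi; last by rewrite a0 scaler0; apply: J0.
have ei : i = k.+1 :> nat by case: i hi => i /= hi0 hi; lia.
case hpk : (p %| k.+1)%N.
  apply: JZ; apply: J_g; right; exists u, (M.+1 + i); split => //.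
    by rewrite ei dvdn_add.
  by rewrite hz ?scale0r ?subr0 //; lia.
have -> : ('C(M + i, i))%:R = 0 :> F.
  apply/eqP; rewrite -(dvdn_pcharf HpF).
  have := mul_bin_left (M + k.+1) k.
  rewrite (_ : (M + k.+1 - k = M.+1)%N); last by lia.
  move=> e; have : (p %| k.+1 * 'C(M + k.+1, k.+1))%N by rewrite e dvdn_mulr.
  by rewrite Euclid_dvdM // hpk ei.
by rewrite scale0r; apply: J0.
Qed.

Lemma right_ideal u n x : Jm x -> Jm (Y x n u).
Proof.
move: u n x; apply: (span_all _ _ _ _ _ _ _ HV (fun u => forall n x, Jm x -> Jm (Y x n u))).
- split.
  + by move=> n x _; rewrite Y0_3; apply: J0.
  + by move=> u v hu hv n x hx; rewrite Y_add3; apply: JD; [apply: hu | apply: hv].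
  + by move=> c u hu n x hx; rewrite YZ3; apply: JZ; apply: hu.
- move=> h l u' hu' n x hx; rewrite -Yh.
  have [K0 hK] := jac_comm (hv h) x u' l n.
  have e := hK K0 (leqnn _).
  have -> : Y x n (Y (hv h) l u') = Y (hv h) l (Y x n u') -
       \sum_(i < K0) (binz l i)%:~R *: Y (Y (hv h) (i : nat)%:Z x) (l + n - (i : nat)%:Z) u'.
    by rewrite -e opprB addrC subrK.
  apply: JB; first by rewrite Yh; apply: J_a; apply: hu'.
  by apply: J_sum => i _; apply: JZ; apply: hu'; rewrite Yh; apply: J_a.
- by move=> n0 x0 hx; apply: Dcl.
Qed.

Lemma backward : is_ideal Y Jm.
Proof.
split; first exact: J_sub.
by move=> u v n hv; split; [apply: left_ideal | apply: right_ideal].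
Qed.

End Back.


Section Fwd.
Hypothesis hid : is_ideal Y Jm.

Lemma forward (u : H) (n : nat) : (2 <= n)%N -> lam n u = 0.
Proof.
move=> hn.
have [W [b [w [ph [hW hvac hg1 hg2 [hphb hphw hphl]]]]]] :=
  model_exists _ _ Hp HpF _ _ Hform ell _ Hlam.
have [f [fl f1 fa _]] : exists f : V -> W,
    [/\ (forall (c : F) x y, f (c *: x + y) = c *: f x + f y),
        f one = w,
        (forall u n x, f (a u n x) = b u n (f x))
      & (forall g : V -> W,
           (forall (c : F) x y, g (c *: x + y) = c *: g x + g y) ->
           g one = w ->
           (forall u n x, g (a u n x) = b u n (g x)) ->
           forall x, g x = f x)].
  by case: HV => _ _ hU; apply: hU.
have fD : forall x y, f (x + y) = f x + f y.
  by move=> x y; rewrite -{1}[x]scale1r fl scale1r.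
have f0 : f 0 = 0.
  have h := fD 0 0; rewrite addr0 in h.
  by apply: (addrI (f 0)); rewrite addr0 -h.
have fZ : forall c x, f (c *: x) = c *: f x by move=> c x; rewrite -[c *: x]addr0 fl f0 addr0.
have fB : forall x c y, f (x - c *: y) = f x - c *: f y.
  by move=> x c y; rewrite fD -[- (c *: y)]scaleNr fZ scaleNr.
have b0 : forall u n, b u n 0 = 0.
  move=> u' n'; case: hW => hl _ _.
  have h := hl u' n' 1 0 0; rewrite !scale1r addr0 in h.
  by apply: (addrI (b u' n' 0)); rewrite addr0 -h.
have fit : forall k u m x, f (iter k (a u m) x) = iter k (b u m) (f x).
  by move=> k u' m x; elim: k => [|k IH] //=; rewrite fa IH.
have fJ : forall x, Jm x -> f x = 0.
  apply: J_ind.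
  - split => //; first by move=> x y hx hy; rewrite fD hx hy addr0.
    by move=> c x hx; rewrite fZ hx scaler0.
  - by move=> u' n' y hy; rewrite fa hy b0.
  move=> y [[u' [m [hm ->]]] | [u' [n0 [hn0 hpn ->]]]].
    case: m hm => // M _; rewrite fB fit f1.
    by rewrite (_ : - Posz M.+1 = Negz M) // hg1 subrr.
  case: n0 hn0 hpn => // M _ hpn; rewrite fB fa f1.
  by rewrite (_ : - Posz M.+1 = Negz M) // hg2 // subrr.
have phl : forall c x y, ph (f (c *: x + y)) = c * ph (f x) + ph (f y).
  by move=> c x y; rewrite fl hphl.
have ph0 : ph 0 = 0.
  have h := hphl 1 0 0; rewrite scale1r addr0 mul1r in h.
  by apply: (addrI (ph 0)); rewrite addr0 -h.
have phD : forall x y, ph (f (x + y)) = ph (f x) + ph (f y).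
  by move=> x y; rewrite -{1}[x]scale1r phl mul1r.
have phsum : forall (I : Type) (r : seq I) (G : I -> V),
    ph (f (\sum_(i <- r) G i)) = \sum_(i <- r) ph (f (G i)).
  move=> I r G; elim: r => [|i r IH]; first by rewrite !big_nil f0 ph0.
  by rewrite !big_cons phD IH.
pose psi k x := ph (f (Dsq x k)).
have rec : forall x' k, psi k (a u (- Posz 1) x') =
    \sum_(i < k.+1) lam i.+1 u * psi (k - i)%N x'.
  move=> x' k; rewrite /psi /Dsq (Drec u x' 0 k) phsum; apply: eq_bigr => i _.
  rewrite -[_ *: _]addr0 phl f0 ph0 addr0 add0n binn mul1r fa.
  by rewrite (_ : - Posz (1 + i) = Negz i) // hphb.
pose j := n.-1; pose k := (p * j)%N; pose K := k.+1.
pose L := \poly_(i < K) lam i.+1 u.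
have cl : forall jj kk, (kk < K)%N -> psi kk (iter jj (a u (- Posz 1)) one) = (L ^+ jj)`_kk.
  elim=> [|jj IH] kk hk.
    rewrite /= /psi Dsq_one expr0 coef1; case: eqP => _.
      by rewrite f1 hphw.
    by rewrite f0 ph0.
  rewrite iterS rec exprS coefM; apply: eq_bigr => i _.
  rewrite IH; last by rewrite /K; case: i => i /=; lia.
  by rewrite coef_poly (_ : (i < K)%N = true) //; case: i => i /=; rewrite /K; lia.
have hx : Jm (iter p (a u (- Posz 1)) one - lam 1 u ^+ p *: one).
  by apply: J_g; left; exists u, 1%N.
have hY : Jm (Y (iter p (a u (- Posz 1)) one - lam 1 u ^+ p *: one) (- Posz k - 1) one).
  by case: hid => _ h; case: (h one _ (- Posz k - 1) hx).
have := fJ _ hY; rewrite Y_sub_one Yvac negm1.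
have kp : (k == 0%N) = false by apply/negbTE; rewrite /k muln_eq0 negb_or -lt0n prime_gt0 //=; lia.
rewrite kp scaler0 subr0 => h0.
have : psi k (iter p (a u (- Posz 1)) one) = 0 by rewrite /psi /Dsq h0 ph0.
rewrite cl ?ltnSn // /k /L poly_frob //; last by rewrite /K ltnS leq_pmull // prime_gt0.
rewrite (_ : j.+1 = n); last by rewrite /j; lia.
by move/eqP; rewrite expf_eq0 => /andP[_ /eqP].
Qed.

End Fwd.

End Main.

Theorem proposition5
  (F : fieldType) (p : nat) (Hp : prime p) (HpF : p \in [pchar F])
  (H : vectType F) (form : H -> H -> F) (Hform : nondeg_sym_bilinear form)
  (ell : F)
  (V : lmodType F) (a : H -> int -> V -> V) (one : V)
  (HV : induced_vacuum_module form ell a one)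
  (Y : V -> int -> V -> V) (HY : vertex_algebra Y one)
  (HYh : forall (u : H) (n : int) (w : V), Y (a u (-1) one) n w = a u n w)
  (lam : nat -> H -> F)
  (Hlam : forall n : nat, (0 < n)%N ->
     forall (c : F) (u v : H), lam n (c *: u + v) = c * lam n u + lam n v) :
  is_ideal Y (J_submodule p a one lam)
  <-> (forall (u : H) (n : nat), (2 <= n)%N -> lam n u = 0).
Proof.
split => [hid u n hn | hz].
  exact: (@forward _ _ Hp HpF _ _ Hform _ _ _ _ HV _ HY HYh _ Hlam hid u n hn).
exact: (@backward _ _ Hp HpF _ _ _ _ _ _ HV _ HY HYh _ hz).
Qed.
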